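(* Let $b\ge 2$ and $n\ge 0$ be integers. Then $$g(T_b(n)) = \frac{(b^{3}+b^{2}-b-1)\,b^{2n} + \{(n-1)(b^{2}-1)-2\}\,b^{n} - 2b + 4}{2}.$$
   Context: For integers $b\ge 2$, $n\ge 0$ and $i\ge 0$ put $s_i=(b+1)b^{n+i}-1$, and let $T_b(n)=\langle\{s_i : i\in\mathbb{N}\}\rangle$ be the submonoid of $(\mathbb{N},+)$ generated by these numbers (a numerical semigroup). For a numerical semigroup $S$, the genus $g(S)$ is the cardinality of $\mathbb{N}\setminus S$. *)

(* Defs.v *)
From mathcomp Require Import all_boot all_order all_algebra.
Set Implicit Arguments. Unset Strict Implicit. Unset Printing Implicit Defensive.

Definition s_gen (b n i : nat) : nat := (b + 1) * b ^ (n + i) - 1.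

Inductive in_submonoid (G : nat -> Prop) : nat -> Prop :=
  | sm_zero : in_submonoid G 0
  | sm_add : forall g x, G g -> in_submonoid G x -> in_submonoid G (g + x).

Definition T (b n : nat) : nat -> Prop :=
  in_submonoid (fun x => exists i, x = s_gen b n i).

Definition has_genus (S : nat -> Prop) (g : nat) : Prop :=
  exists l : seq nat, uniq l /\ (forall x, x \in l <-> ~ S x) /\ size l = g.

(* Main.v *)
Require Import Defs.
From mathcomp Require Import all_boot all_order all_algebra zify ring.
Import GRing.Theory Num.Theory.
Set Implicit Arguments. Unset Strict Implicit. Unset Printing Implicit Defensive.

Fixpoint Dfuel (b k M : nat) : nat :=
  if k is k'.+1 then M %/ b + Dfuel b k' (M %/ b) else 0.
Definition D b M := Dfuel b M M.

Lemma divb_lt b M : 2 <= b -> 0 < M -> M %/ b < M.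
Proof. by move=> hb hM; apply: ltn_Pdiv. Qed.

Lemma Dfuel_S b k M : 2 <= b -> M <= k -> Dfuel b k.+1 M = Dfuel b k M.
Proof.
move=> hb; elim: k M => [|k IH] M hM.
  by move: hM; rewrite leqn0 => /eqP ->; rewrite /= div0n.
rewrite [LHS]/= [RHS]/=; congr (_ + _); apply: IH.
case: (posnP M) => [->|hM0]; first by rewrite div0n.
by rewrite -ltnS; apply: leq_trans (divb_lt hb hM0) hM.
Qed.

Lemma Dfuel_ge b k M : 2 <= b -> M <= k -> Dfuel b k M = D b M.
Proof.
move=> hb hMk; rewrite /D -(subnKC hMk).
elim: (k - M) => [|j IH]; first by rewrite addn0.
by rewrite addnS Dfuel_S // leq_addr.
Qed.

Lemma D0 b : D b 0 = 0.
Proof. by []. Qed.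

Lemma D_rec b M : 2 <= b -> D b M = M %/ b + D b (M %/ b).
Proof.
move=> hb; case: M => [|k]; first by rewrite div0n.
rewrite /D [Dfuel _ k.+1 _]/=; congr (_ + _); apply: Dfuel_ge => //.
by rewrite -ltnS; apply: divb_lt.
Qed.

Lemma D_mulb b Q r : 2 <= b -> r < b -> D b (b * Q + r) = Q + D b Q.
Proof.
move=> hb hr; rewrite D_rec // mulnC divnMDl ?(leq_trans _ hb) //.
by rewrite divn_small // addn0.
Qed.

Lemma D_small b r : 2 <= b -> r < b -> D b r = 0.
Proof. by move=> hb hr; have := D_mulb 0 hb hr; rewrite muln0 add0n. Qed.

Lemma D_mono b M1 M2 : 2 <= b -> M1 <= M2 -> D b M1 <= D b M2.
Proof.
move=> hb; elim: M2 {-2}M2 (leqnn M2) M1 => [|N IH] M2 hM2 M1 h12.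
  by move: hM2 h12; rewrite leqn0 => /eqP -> ; rewrite leqn0 => /eqP ->.
case: (posnP M1) => [->|hM1]; first by rewrite D0.
rewrite (D_rec M1 hb) (D_rec M2 hb); apply: leq_add; first exact: leq_div2r.
apply: IH; last exact: leq_div2r.
by rewrite -ltnS; apply: leq_trans hM2; apply: divb_lt => //; apply: leq_trans h12.
Qed.

Lemma D_superadd b M1 M2 : 2 <= b -> D b M1 + D b M2 <= D b (M1 + M2).
Proof.
move=> hb; have hb0 : 0 < b by apply: leq_trans hb.
suff H : forall N M1 M2, M1 + M2 <= N -> D b M1 + D b M2 <= D b (M1 + M2) by exact: H.
elim=> [|N IH] {}M1 {}M2 hS.
  by move: hS; rewrite leqn0 addn_eq0 => /andP[/eqP -> /eqP ->].
case: (posnP M1) => [->|hM1]; first by rewrite D0.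
rewrite (D_rec M1 hb) (D_rec M2 hb) (D_rec (M1 + M2) hb) addnACA.
have hd : M1 %/ b + M2 %/ b <= (M1 + M2) %/ b by rewrite divnD // leq_addr.
apply: leq_add => //; apply: leq_trans (D_mono hb hd).
apply: IH.
rewrite -ltnS; apply: leq_trans hS; apply: leq_ltn_trans hd _.
by apply: divb_lt => //; rewrite addn_gt0 hM1.
Qed.

Lemma D_powS b i : 2 <= b -> D b (b ^ i.+1) = b ^ i + D b (b ^ i).
Proof.
move=> hb; have hb0 : 0 < b by apply: leq_trans hb.
by have := D_mulb (b ^ i) hb hb0; rewrite addn0 -expnS.
Qed.

Lemma D_pow b i : 2 <= b -> (b - 1) * D b (b ^ i) = b ^ i - 1.
Proof.
move=> hb; elim: i => [|i IH]; first by rewrite expn0 (D_small hb) ?muln0.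

rewrite D_powS // mulnDr IH expnS.
have : 0 < b ^ i by rewrite expn_gt0 (leq_trans _ hb).
move: (b ^ i) => X hX; rewrite mulnBl mul1n.
have : X <= b * X by rewrite leq_pmull // (leq_trans _ hb).
lia.
Qed.

Definition mm b n := (b + 1) * b ^ n - 1.

Lemma s_gen_eq b n i : 2 <= b ->
  s_gen b n i = mm b n * b ^ i + (b - 1) * D b (b ^ i).
Proof.
move=> hb; rewrite /s_gen /mm D_pow // expnD.
have : 0 < b ^ n by rewrite expn_gt0 (leq_trans _ hb).
have : 0 < b ^ i by rewrite expn_gt0 (leq_trans _ hb).
move: (b ^ n) (b ^ i) => X Y hY hX.
have h1 : 1 <= (b + 1) * X by nia.
rewrite mulnBl mul1n mulnA.
have : Y <= (b + 1) * X * Y by nia.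
lia.
Qed.

Inductive R (b : nat) : nat -> nat -> Prop :=
  | R0 : R b 0 0
  | RS : forall i M t, R b M t -> R b (b ^ i + M) (D b (b ^ i) + t).

Lemma T_add b n x y : T b n x -> T b n y -> T b n (x + y).
Proof.
rewrite /T; elim=> [|g x' hg _ IH] hy; first by [].
by rewrite -addnA; apply: sm_add => //; apply: IH.
Qed.

Lemma R_T b n M t : 2 <= b -> R b M t -> T b n (mm b n * M + (b - 1) * t).
Proof.
move=> hb; elim=> [|i M' t' _ IH]; first by rewrite !muln0; apply: sm_zero.
have -> : mm b n * (b ^ i + M') + (b - 1) * (D b (b ^ i) + t') =
          s_gen b n i + (mm b n * M' + (b - 1) * t') by rewrite s_gen_eq //; lia.
by apply: sm_add => //; exists i.
Qed.

Lemma R_shift b M t : 2 <= b -> R b M t -> R b (b * M) (M + t).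
Proof.
move=> hb; elim=> [|i M' t' _ IH]; first by rewrite muln0; apply: R0.
have := RS i.+1 IH; rewrite D_powS // expnS.
by rewrite mulnDr -!addnA (addnCA M').
Qed.

Lemma R_1 b M t : 2 <= b -> R b M t -> R b M.+1 t.
Proof.
move=> hb h; have := RS 0 h.
have -> : D b (b ^ 0) = 0 by rewrite expn0; apply: D_small.
by rewrite expn0 add0n.
Qed.

Lemma D_R b M t : 2 <= b -> t <= D b M -> R b M t.
Proof.
move=> hb; have hb0 : 0 < b by apply: leq_trans hb.
elim: M {-2}M (leqnn M) t => [|N IH] M hM t ht.
  by move: hM ht; rewrite leqn0 => /eqP ->; rewrite D0 leqn0 => /eqP ->; apply: R0.
case: (posnP M) => [hM0|hM0].
  by move: ht; rewrite hM0 D0 leqn0 => /eqP ->; apply: R0.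
have hM' : M.-1 <= N by rewrite -ltnS prednK.
have hMe : M = b * (M %/ b) + M %% b by rewrite mulnC -divn_eq.
have hr : M %% b < b by rewrite ltn_mod.
move: hMe hr ht hM'.
move: (M %/ b) (M %% b) => Q r hMe hr ht hM'.
rewrite hMe (D_mulb Q hb hr) in ht.
case: (posnP r) => [hr0|hr0].
- subst r; rewrite addn0 in hMe.
  have hQ : 0 < Q by move: hM0; rewrite hMe muln_gt0 => /andP[].
  have hQM : Q <= N.
    apply: leq_trans hM'; rewrite hMe -(prednK hQ) mulnS.
    rewrite -subn1; nia.
  subst M.
  case: (leqP Q t) => hQt.
  + have := R_shift hb (IH Q hQM (t - Q) _).
    rewrite subnKC //; apply => //.
    by rewrite leq_subLR.
  + have hprev : b * Q = (b * Q.-1 + (b - 1)).+1.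
      by rewrite -[in LHS](prednK hQ) mulnS; lia.
    rewrite hprev; apply: R_1 => //; apply: IH.
      by move: hM'; rewrite hprev.
    rewrite D_mulb //; last by lia.
    by lia.
- have hr1 : r = r.-1.+1 by rewrite prednK.
  rewrite hMe hr1 addnS; apply: R_1 => //; apply: IH.
    by move: hM'; rewrite hMe hr1 addnS.
  rewrite D_mulb //; last by rewrite (leq_ltn_trans (leq_pred r)).
Qed.

Lemma T_D b n x : 2 <= b -> T b n x ->
  exists M t, t <= D b M /\ x = mm b n * M + (b - 1) * t.
Proof.
move=> hb; rewrite /T; elim=> [|g x' [i ->] _ [M [t [ht ->]]]]; first by exists 0, 0; rewrite !muln0.
exists (b ^ i + M), (D b (b ^ i) + t); split.
  by apply: leq_trans (D_superadd _ _ hb); rewrite leq_add2l.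
by rewrite s_gen_eq //; lia.
Qed.

Definition LL b n := (b * b - 1) * b ^ n.

Lemma mm_ge2 b n : 2 <= b -> 2 <= mm b n.
Proof.
move=> hb; rewrite /mm.
have : 0 < b ^ n by rewrite expn_gt0 (leq_trans _ hb).
nia.
Qed.

Lemma D_LL b n : 2 <= b -> D b (LL b n) = mm b n - 1.
Proof.
move=> hb; have hb0 : 0 < b by apply: leq_trans hb.
rewrite /LL /mm; elim: n => [|n IH].
  rewrite expn0 !muln1.
  have -> : b * b - 1 = b * (b - 1) + (b - 1) by nia.
  rewrite D_mulb //; last by lia.
  by rewrite (D_small hb); lia.
rewrite expnS mulnCA -[b * ((b * b - 1) * b ^ n)]addn0 D_mulb // IH.
have : 0 < b ^ n by rewrite expn_gt0 hb0.
move: (b ^ n) => X hX.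
have h1 : 2 <= (b + 1) * X by nia.
have h2 : b <= b * b by nia.
rewrite !mulnBl mul1n; nia.
Qed.

Lemma coprime_bm b n : 2 <= b -> coprime (b - 1) (mm b n).
Proof.
move=> hb.
have -> : mm b n = ((b + 1) * D b (b ^ n) + 1) * (b - 1) + 1.
  have hY := D_pow n hb; rewrite /mm.
  have : 0 < b ^ n by rewrite expn_gt0 (leq_trans _ hb).
  move: (b ^ n) (D b (b ^ n)) hY => X Y hY hX.
  have hb1 : b = (b - 1) + 1 by lia.
  move: (b - 1) hb1 hY => c hc hY; rewrite hc.
  have hX1 : X = c * Y + 1 by lia.
  subst X; nia.
by rewrite /coprime gcdnMDl gcdn1.
Qed.

Lemma mod_cancel b n a c : 2 <= b ->
  (b - 1) * a = (b - 1) * c %[mod mm b n] -> a = c %[mod mm b n].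
Proof.
move=> hb; wlog hac : a c / c <= a.
  move=> H; case: (leqP c a) => h; first exact: H.
  by move=> /esym E; apply/esym/H => //; apply: ltnW.
move=> /eqP; rewrite eqn_mod_dvd ?leq_mul2l ?hac ?orbT // -mulnBr.
rewrite Gauss_dvdr; last by rewrite coprime_sym coprime_bm.
by rewrite -eqn_mod_dvd // => /eqP.
Qed.

Definition rr b n t := (b - 1) * t %% mm b n.
Definition kk b n t := (b - 1) * t %/ mm b n.
Definition mu b n t := find (fun M => t <= D b M) (iota 0 (LL b n)).

Lemma mu_P1 b n t : 2 <= b -> t <= mm b n - 1 -> t <= D b (mu b n t).
Proof.
move=> hb ht; rewrite /mu.
case: (boolP (has (fun M => t <= D b M) (iota 0 (LL b n)))) => H.
  have := nth_find 0 H.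
  rewrite nth_iota ?add0n //.
  by rewrite -[X in _ < X](size_iota 0 (LL b n)) -has_find.
move: H; rewrite has_find size_iota -leqNgt => H.
by apply: leq_trans (D_mono hb H); rewrite D_LL.
Qed.

Lemma mu_P2 b n t M : t <= D b M -> mu b n t <= M.
Proof.
move=> ht; rewrite /mu; case: (ltnP M (LL b n)) => hM.
  rewrite leqNgt; apply/negP => hlt.
  have := before_find 0 hlt; rewrite nth_iota // add0n => hf.
  by rewrite ht in hf.
by apply: leq_trans (find_size _ _) _; rewrite size_iota.
Qed.

Lemma mu_le b n t : mu b n t <= LL b n.
Proof. by rewrite /mu -[X in _ <= X](size_iota 0 (LL b n)) find_size. Qed.

Lemma mu_lt b n t M : M < mu b n t -> D b M < t.
Proof.
move=> hM; have hML : M < LL b n by apply: leq_trans hM (mu_le _ _ _).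
have := before_find 0 hM; rewrite nth_iota // add0n.
by move/negbT; rewrite -ltnNge.
Qed.

Lemma rr_lt b n t : 2 <= b -> rr b n t < mm b n.
Proof. by move=> hb; rewrite /rr ltn_mod (leq_trans _ (mm_ge2 n hb)). Qed.

Lemma rr_inj b n t1 t2 : 2 <= b -> t1 < mm b n -> t2 < mm b n ->
  rr b n t1 = rr b n t2 -> t1 = t2.
Proof.
move=> hb h1 h2 /(mod_cancel hb).
by rewrite !modn_small.
Qed.

Lemma rr_surj b n r0 : 2 <= b -> r0 < mm b n ->
  exists2 t, t < mm b n & rr b n t = r0.
Proof.
move=> hb hr0.
have U : uniq (map (rr b n) (iota 0 (mm b n))).
  rewrite map_inj_in_uniq ?iota_uniq // => t1 t2.
  rewrite !mem_iota !add0n => /andP[_ h1] /andP[_ h2]; exact: rr_inj.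
have Sub : {subset map (rr b n) (iota 0 (mm b n)) <= iota 0 (mm b n)}.
  by move=> x /mapP[t _ ->]; rewrite mem_iota add0n rr_lt.
have [_ E] := uniq_min_size U Sub (eq_leq (esym (size_map _ _))).
have : r0 \in map (rr b n) (iota 0 (mm b n)) by rewrite E mem_iota add0n.
by case/mapP => t; rewrite mem_iota add0n => /andP[_ ht] ->; exists t.
Qed.

Lemma rr_kk b n t : 2 <= b -> (b - 1) * t = mm b n * kk b n t + rr b n t.
Proof. by move=> hb; rewrite /rr /kk {1}(divn_eq ((b - 1) * t) (mm b n)) (mulnC (_ %/ _)). Qed.

Definition gl b n := [seq mm b n * j + rr b n t |
   t <- iota 0 (mm b n), j <- iota 0 (kk b n t + mu b n t)].

Lemma gl_notT b n t j : 2 <= b -> t < mm b n -> j < kk b n t + mu b n t ->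
  ~ T b n (mm b n * j + rr b n t).
Proof.
move=> hb ht hj /(T_D hb) [M' [t' [ht' E]]].
set m := mm b n in ht hj E.
have hm : 0 < m by apply: leq_trans (mm_ge2 n hb).
have Emod : (b - 1) * t' = (b - 1) * t %[mod m].
  have := congr1 (modn^~ m) E; rewrite /= !(mulnC m) !modnMDl /rr -/m modn_mod.
  by move=> ->.
have Emod2 := mod_cancel hb Emod.
rewrite (modn_small ht) in Emod2.
have Et' : t' = t + m * (t' %/ m) by rewrite -Emod2 addnC mulnC -divn_eq.
set a := t' %/ m in Et'.
have E2 : m * j + rr b n t = m * (M' + (b - 1) * a + kk b n t) + rr b n t.
  rewrite E Et' mulnDr (@rr_kk b n t hb) -/m; lia.
have Ej : j = M' + (b - 1) * a + kk b n t.
  by move/eqP: E2; rewrite eqn_add2r eqn_mul2l (negbTE (lt0n_neq0 hm)) => /eqP.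
have : mu b n t <= M' + (b - 1) * a.
  apply: mu_P2; apply: leq_trans (D_mono hb (leq_addr _ _)).
  by apply: leq_trans ht'; rewrite Et' leq_addr.
lia.
Qed.

Lemma notT_gl b n x : 2 <= b -> ~ T b n x -> x \in gl b n.
Proof.
move=> hb hx.
set m := mm b n.
have hm : 0 < m by apply: leq_trans (mm_ge2 n hb).
have [t ht htr] := rr_surj hb (ltn_pmod x hm : x %% mm b n < mm b n).
apply/allpairsPdep; exists t, (x %/ m); split.
- by rewrite mem_iota add0n.
- rewrite mem_iota add0n /=; rewrite ltnNge; apply/negP => hge.
  apply: hx.
  have hD : t <= D b (x %/ m - kk b n t).
    have h1 : t <= mm b n - 1 by lia.
    apply: leq_trans (mu_P1 hb h1) (D_mono hb _).
    move: hge; rewrite /m; lia.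
  have := R_T n hb (D_R hb hD).
  have -> // : mm b n * (x %/ m - kk b n t) + (b - 1) * t = x.
  rewrite (@rr_kk b n t hb) htr -/m mulnBr addnA subnK; first by rewrite mulnC -divn_eq.
  by rewrite leq_mul2l (leq_trans (leq_addr _ _) hge) orbT.
- by rewrite htr -/m mulnC -divn_eq.
Qed.

Lemma gl_uniq b n : 2 <= b -> uniq (gl b n).
Proof.
move=> hb; apply: allpairs_uniq_dep.
- exact: iota_uniq.
- by move=> t _; exact: iota_uniq.
move=> p1 p2 /allpairsPdep [t1 [j1 [h1 _ ->]]] /allpairsPdep [t2 [j2 [h2 _ ->]]] /= E.
move: h1 h2; rewrite !mem_iota !add0n /= => ht1 ht2.
have hm : 0 < mm b n by apply: leq_trans (mm_ge2 n hb).
have Er : rr b n t1 = rr b n t2.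
  have := congr1 (modn^~ (mm b n)) E; rewrite /= !(mulnC (mm b n)) !modnMDl.
  by rewrite !modn_small ?rr_lt.
have Et := rr_inj hb ht1 ht2 Er; subst t2.
move/eqP: E; rewrite eqn_add2r eqn_mul2l (negbTE (lt0n_neq0 hm)) /= => /eqP ->.
by [].
Qed.

Lemma gl_size b n :
  size (gl b n) = \sum_(t <- iota 0 (mm b n)) (kk b n t + mu b n t).
Proof.
rewrite /gl size_allpairs_dep sumnE big_map.
by apply: eq_bigr => t _; rewrite size_iota.
Qed.

Lemma sum_iota_id N : 2 * \sum_(t <- iota 0 N) t = N * (N - 1).
Proof.
elim: N => [|N IH]; first by rewrite big_nil.
rewrite -[N.+1]addn1 iotaD big_cat big_seq1 mulnDr IH add0n; case: N {IH} => //= N; nia.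
Qed.

Lemma sum_iota_const N c : \sum_(t <- iota 0 N) c = N * c.
Proof.
elim: N => [|N IH]; first by rewrite big_nil.
by rewrite -[N.+1]addn1 iotaD big_cat big_seq1 IH mulnDl mul1n.
Qed.

Lemma sum_iota_lt N c : \sum_(t <- iota 0 N) (t < c) = minn c N.
Proof.
elim: N => [|N IH]; first by rewrite big_nil minn0.
rewrite -[N.+1]addn1 iotaD big_cat big_seq1 IH add0n.
case: (ltnP N c) => h /=; lia.
Qed.

Lemma sum_iota_gt N d : \sum_(t <- iota 0 N) (d < t) = N - minn d.+1 N.
Proof.
elim: N => [|N IH]; first by rewrite big_nil.
rewrite -[N.+1]addn1 iotaD big_cat big_seq1 IH add0n.
case: (ltnP d N) => h /=; lia.
Qed.

Lemma rr_perm b n : 2 <= b -> perm_eq (map (rr b n) (iota 0 (mm b n))) (iota 0 (mm b n)).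
Proof.
move=> hb; apply: uniq_perm; last 1 first.
- move=> x; apply/mapP/idP.
    by case=> t _ ->; rewrite mem_iota add0n rr_lt.
  rewrite mem_iota add0n => /(rr_surj hb) [t ht <-].
  by exists t; rewrite // mem_iota add0n.
- rewrite map_inj_in_uniq ?iota_uniq // => t1 t2.
  rewrite !mem_iota !add0n => /andP[_ h1] /andP[_ h2]; exact: rr_inj.
- exact: iota_uniq.
Qed.

Lemma sum_kk b n : 2 <= b ->
  2 * \sum_(t <- iota 0 (mm b n)) kk b n t = (b - 2) * (mm b n - 1).
Proof.
move=> hb; set m := mm b n.
have hm : 0 < m by apply: leq_trans (mm_ge2 n hb).
have E1 : \sum_(t <- iota 0 m) (b - 1) * t =
          m * \sum_(t <- iota 0 m) kk b n t + \sum_(t <- iota 0 m) rr b n t.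
  rewrite big_distrr -big_split; apply: eq_bigr => t _ /=; exact: rr_kk.
have E2 : \sum_(t <- iota 0 m) rr b n t = \sum_(t <- iota 0 m) t.
  by rewrite -(big_map (rr b n) xpredT id) (perm_big _ (rr_perm n hb)).
rewrite -big_distrr E2 in E1.
have ST := sum_iota_id m.
move: E1 ST; set SK := \sum_(t <- _) kk b n t; set ST := \sum_(t <- _) t.
move=> E1 ST2.
have : m * (2 * SK) = m * ((b - 2) * (m - 1)).
  have : m * SK = (b - 2) * ST.
    have hb1 : b - 1 = (b - 2) + 1 by lia.
    move: E1; rewrite hb1 => E1.
    have E1' : (b - 2 + 1) * ST = m * SK + ST := E1.
    rewrite mulnDl mul1n in E1'; lia.
  move=> H; rewrite mulnCA H mulnCA ST2; lia.
by move/eqP; rewrite eqn_mul2l (negbTE (lt0n_neq0 hm)) => /eqP.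
Qed.

Definition FF b N := \sum_(M <- iota 0 N) D b M.

Lemma mu_count b n t : 2 <= b -> t <= mm b n - 1 ->
  mu b n t = \sum_(M <- iota 0 (LL b n)) (D b M < t).
Proof.
move=> hb ht.
transitivity (\sum_(M <- iota 0 (LL b n)) (M < mu b n t)).
  by rewrite sum_iota_lt; apply/esym/minn_idPl; exact: mu_le.
apply: eq_big_seq => M _ /=; congr (nat_of_bool _); apply/idP/idP; last first.
  move=> h; rewrite ltnNge; apply/negP => hle.
  have := leq_trans (mu_P1 hb ht) (D_mono hb hle); rewrite leqNgt h //.
exact: mu_lt.
Qed.

Lemma sum_mu b n : 2 <= b ->
  \sum_(t <- iota 0 (mm b n)) mu b n t + FF b (LL b n) = LL b n * (mm b n - 1).
Proof.
move=> hb.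
have -> : \sum_(t <- iota 0 (mm b n)) mu b n t = \sum_(t <- iota 0 (mm b n)) \sum_(M <- iota 0 (LL b n)) (D b M < t).
  apply: eq_big_seq => t; rewrite mem_iota add0n => /andP[_ ht]; apply: mu_count => //; lia.
rewrite exchange_big /FF -big_split /=.
transitivity (\sum_(M <- iota 0 (LL b n)) (mm b n - 1)); last by rewrite sum_iota_const.
apply: eq_big_seq => M; rewrite mem_iota add0n => /andP[_ hM] /=.
rewrite sum_iota_gt.
have : D b M <= mm b n - 1 by rewrite -D_LL //; apply: D_mono => //; apply: ltnW.
have := mm_ge2 n hb; lia.
Qed.

Lemma FF_S b N : FF b N.+1 = FF b N + D b N.
Proof. by rewrite /FF -[N.+1]addn1 iotaD big_cat big_seq1. Qed.

Lemma FF_mulb b N : 2 <= b -> 2 * FF b (b * N) = b * (2 * FF b N) + b * N * (N - 1).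
Proof.
move=> hb; elim: N => [|N IH]; first by rewrite muln0 /FF big_nil !muln0.
have Eblk : FF b (b * N.+1) = FF b (b * N) + b * (N + D b N).
  rewrite /FF mulnS addnC iotaD big_cat /=; congr (_ + _).
  rewrite add0n -[b * N]addn0 iotaDl big_map.
  transitivity (\sum_(r <- iota 0 b) (N + D b N)); last by rewrite sum_iota_const.
  by apply: eq_big_seq => r; rewrite mem_iota add0n => /andP[_ hr] /=; rewrite D_mulb.
rewrite Eblk FF_S mulnDr IH.
have hN : N * (N - 1) + 2 * N = N.+1 * (N.+1 - 1) by case: (N) => [|k] //; nia.
move: (FF b (b * N)) (FF b N) (D b N) hN => x y z hN.
nia.
Qed.

Lemma FF_small b : 2 <= b -> FF b b = 0.
Proof.
move=> hb; rewrite /FF big_seq big1 // => M; rewrite mem_iota add0n => /andP[_ hM].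
exact: D_small.
Qed.

Local Open Scope ring_scope.

Lemma FF_LL b n : (2 <= b)%N ->
  ((2 * FF b (LL b n))%N%:R : rat) =
    (b%:R * b%:R - 1) * b%:R ^+ n * ((b%:R + 1) * (b%:R ^+ n - 1) - n%:R)
    + (b%:R - 1) * (2 * (b%:R * b%:R - 1) * b%:R ^+ n - b%:R * b%:R * b%:R ^+ n).
Proof.
move=> hb.
have hbb : (1 <= b * b)%N by nia.
elim: n => [|n IH].
  have E : (2 * FF b (LL b 0) + 2 * (b - 1) = b * b * (b - 1))%N.
    have H1 := @FF_mulb b b hb; rewrite FF_small // !muln0 add0n in H1.
    have H2 := @FF_S b (b * b - 1).
    have H3 := @D_LL b 0 hb; rewrite /mm expn0 muln1 /LL expn0 muln1 in H3 *.
    have E0 : (b * b - 1).+1 = b * b by lia.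
    rewrite E0 in H2; rewrite H2 H3 in H1; lia.
  have E' := congr1 (fun x : nat => x%:R : rat) E; rewrite /= natrD natrM in E'.
  rewrite natrM !natrB // ?natrM // in E'.
  rewrite natrB // in E'.
  have EF : (FF b (LL b 0))%:R = ((b%:R * b%:R * (b%:R - 1) - 2 * (b%:R - 1)) / 2 : rat).
    by rewrite -E'; field.
  by rewrite natrM EF expr0; field.
  by apply: leq_trans hb.
by apply: leq_trans hb.
have hLL : (1 <= LL b n)%N.
  rewrite /LL; have : (0 < b ^ n)%N by rewrite expn_gt0 (leq_trans _ hb).
  nia.
have -> : LL b n.+1 = (b * LL b n)%N by rewrite /LL expnS mulnCA.
have hX : (LL b n)%:R = (b%:R * b%:R - 1) * b%:R ^+ n :> rat.
  by rewrite /LL natrM natrB // natrM natrX.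
rewrite (@FF_mulb b _ hb) natrD (natrM _ b (2 * _)) IH.
move: (LL b n) hX hLL => X hX hLL.
rewrite !natrM natrB // hX -[n.+1]addn1 exprD expr1 natrD.
ring.
Qed.


Theorem mainTheorem2 (b n : nat) (hb : (2 <= b)%N) :
  exists g : nat, has_genus (T b n) g /\
    2%:R * (g%:R : rat) =
      ((b%:R ^+ 3 + b%:R ^+ 2 - b%:R - 1) * b%:R ^+ (2 * n)
       + ((n%:R - 1) * (b%:R ^+ 2 - 1) - 2%:R) * b%:R ^+ n
       - 2%:R * b%:R + 4%:R).
Proof.
exists (size (gl b n)); split.
  exists (gl b n); split; first exact: gl_uniq.
  split => //; move=> x; split.
    case/allpairsPdep => t [j [ht hj ->]].
    move: ht hj; rewrite !mem_iota !add0n /= => ht hj.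
    exact: gl_notT.
  exact: notT_gl.
rewrite gl_size big_split /=.
have HK := sum_kk n hb.
have HM := sum_mu n hb.
have HF := FF_LL n hb.
move: HK HM HF.
set SK := \sum_(t <- _) kk b n t.
set SM := \sum_(t <- _) mu b n t.
set F := FF b (LL b n).
move=> HK HM HF.
have hm2 := mm_ge2 n hb.
have hX1 : (1 <= b ^ n)%N by rewrite expn_gt0 (leq_trans _ hb).
have hmR : (mm b n)%:R = (b%:R + 1) * b%:R ^+ n - 1 :> rat.
  by rewrite /mm natrB ?natrM ?natrD ?natrX //; nia.
have hLR : (LL b n)%:R = (b%:R * b%:R - 1) * b%:R ^+ n :> rat.
  by rewrite /LL natrM natrB ?natrM ?natrX //; nia.
clearbody SK SM F.
move: (mm b n) (LL b n) hmR hLR hm2 HK HM => m L hmR hLR hm2 HK HM.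
have HK' := congr1 (fun x : nat => x%:R : rat) HK.
have HM' := congr1 (fun x : nat => x%:R : rat) HM.
rewrite /= !natrM natrB // natrB ?hmR in HK'; last lia.
rewrite /= natrD natrM natrB ?hmR ?hLR // in HM'; last lia.
rewrite natrM in HF.
rewrite natrD (mulnC 2 n) exprM.
have -> : SK%:R = ((b%:R - 2%:R) * ((b%:R + 1) * b%:R ^+ n - 1 - 1)) / 2 :> rat.
  by rewrite -HK'; field.
have -> : SM%:R = (b%:R * b%:R - 1) * b%:R ^+ n * ((b%:R + 1) * b%:R ^+ n - 1 - 1) - F%:R :> rat.
  by rewrite -HM' addrK.
have -> : F%:R = ((b%:R * b%:R - 1) * b%:R ^+ n * ((b%:R + 1) * (b%:R ^+ n - 1) - n%:R)
    + (b%:R - 1) * (2 * (b%:R * b%:R - 1) * b%:R ^+ n - b%:R * b%:R * b%:R ^+ n)) / 2 :> rat.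
  by rewrite -HF; field.
field.
by [].
Qed.
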